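(* Let $r>0$, let $k\in\{2,\dots,n\}$, and let $\mathbf{c}=(c_1,\dots,c_{k-1},c_k,0,\dots,0)\in\mathbb{R}^n_{\ge0}$ and $\mathbf{c}'=(c_1,\dots,c_{k-1},0,0,\dots,0)$ (i.e. $\mathbf{c}'$ is obtained from $\mathbf{c}$ by replacing its $k$-th component by $0$). Then $$\mathrm{Vol}\big(C(\mathbf{0},1)\cap C(\mathbf{c},r)\big)\le \mathrm{Vol}\big(C(\mathbf{0},1)\cap C(\mathbf{c}',r)\big).$$
   Context: For $\mathbf{c}\in\mathbb{R}^n$, $r\ge 0$, $C(\mathbf{c},r)=\{\mathbf{x}\in\mathbb{R}^n:\|\mathbf{x}-\mathbf{c}\|_1\le r\}$. *)

(* Defs.v *)
(* classical reals. Volume in R^n is formalized as Jordan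
   content (limit of inner/outer counts of grid cubes of side 1/(m+1)). *)
From Stdlib Require Import Reals List Arith ClassicalEpsilon.
Import ListNotations.
Open Scope R_scope.

(* Points of R^n are functions nat -> R; only coordinates 0..n-1 matter
   (coordinate i here is the paper's coordinate i+1). *)

Fixpoint l1dist (n : nat) (x y : nat -> R) : R :=
  match n with
  | O => 0
  | S n' => l1dist n' x y + Rabs (x n' - y n')
  end.

Definition Cball (n : nat) (c : nat -> R) (r : R) : (nat -> R) -> Prop :=
  fun x => l1dist n x c <= r.

Fixpoint tuples (n K : nat) : list (list nat) :=
  match n with
  | O => [nil]
  | S n' => flat_map (fun l => map (fun j => j :: l) (seq 0 K)) (tuples n' K)
  end.

Definition gcube (n B m : nat) (l : list nat) : (nat -> R) -> Prop :=
  fun x => forall i, (i < n)%nat ->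
    - INR B + INR (nth i l O) / INR (S m) <= x i <=
    - INR B + INR (S (nth i l O)) / INR (S m).

Definition countP (P : list nat -> Prop) (L : list (list nat)) : nat :=
  length (filter (fun l => if excluded_middle_informative (P l) then true else false) L).

Definition inner_approx (n B : nat) (A : (nat -> R) -> Prop) (m : nat) : R :=
  INR (countP (fun l => forall x, gcube n B m l x -> A x)
               (tuples n (2 * B * S m))) / INR (S m) ^ n.

Definition outer_approx (n B : nat) (A : (nat -> R) -> Prop) (m : nat) : R :=
  INR (countP (fun l => exists x, gcube n B m l x /\ A x)
               (tuples n (2 * B * S m))) / INR (S m) ^ n.

Definition has_volume (n : nat) (A : (nat -> R) -> Prop) (v : R) : Prop :=
  exists B : nat,
    (forall x, A x -> forall i, (i < n)%nat -> - INR B <= x i <= INR B) /\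
    Un_cv (inner_approx n B A) v /\ Un_cv (outer_approx n B A) v.

(* Main.v *)
Require Import Defs.
From Stdlib Require Import Reals List Arith Lia Lra Permutation FinFun ClassicalEpsilon FunctionalExtensionality.
Import ListNotations.
Open Scope R_scope.

Definition ind {A} (P : A -> Prop) (a : A) : nat :=
  if excluded_middle_informative (P a) then 1%nat else 0%nat.

Lemma countP_sum (P : list nat -> Prop) L : countP P L = list_sum (map (ind P) L).
Proof.
  induction L as [|a L IH]; auto.
  unfold countP in *. simpl. unfold ind at 1; destruct excluded_middle_informative; simpl; rewrite <- IH; reflexivity.
Qed.

Lemma list_sum_le {A} (f g : A -> nat) L :
  (forall a, In a L -> (f a <= g a)%nat) -> (list_sum (map f L) <= list_sum (map g L))%nat.
Proof.
  induction L as [|a L IH]; simpl; intros H; [lia|].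
  specialize (H a (or_introl eq_refl)) as Ha. assert (list_sum (map f L) <= list_sum (map g L))%nat by (apply IH; auto). lia.
Qed.

Lemma list_sum_le_add {A} (f g : A -> nat) C L :
  (forall a, In a L -> (f a <= g a + C)%nat) ->
  (list_sum (map f L) <= list_sum (map g L) + C * length L)%nat.
Proof.
  induction L as [|a L IH]; simpl; intros H; [lia|].
  specialize (H a (or_introl eq_refl)) as Ha. assert (list_sum (map f L) <= list_sum (map g L) + C * length L)%nat by (apply IH; auto). lia.
Qed.

Lemma list_sum_mul {A} (f : A -> nat) s L :
  list_sum (map (fun x => s * f x)%nat L) = (s * list_sum (map f L))%nat.
Proof. induction L; simpl; try rewrite IHL; lia. Qed.

Lemma list_sum_flat_map {A B} (F : B -> nat) (f : A -> list B) L :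
  list_sum (map F (flat_map f L)) = list_sum (map (fun a => list_sum (map F (f a))) L).
Proof.
  induction L; simpl; auto. rewrite map_app, list_sum_app, IHL. reflexivity.
Qed.

Lemma list_sum_map_map {A B} (F : B -> nat) (f : A -> B) L :
  list_sum (map F (map f L)) = list_sum (map (fun a => F (f a)) L).
Proof. rewrite map_map. reflexivity. Qed.

Lemma ind_le {A} (P Q : A -> Prop) a : (P a -> Q a) -> (ind P a <= ind Q a)%nat.
Proof. unfold ind; do 2 destruct excluded_middle_informative; intuition lia. Qed.

Lemma ind_split {A} (P Q : A -> Prop) a : (ind P a <= ind Q a + ind (fun x => P x /\ ~ Q x) a)%nat.
Proof. unfold ind; repeat destruct excluded_middle_informative; intuition lia. Qed.

Lemma ind_or {A} (P Q : A -> Prop) a : (ind (fun x => P x \/ Q x) a <= ind P a + ind Q a)%nat.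
Proof. unfold ind; repeat destruct excluded_middle_informative; intuition lia. Qed.

Lemma ind_compl {A} (P : A -> Prop) a : (ind P a + ind (fun x => ~ P x) a = 1)%nat.
Proof. unfold ind; repeat destruct excluded_middle_informative; intuition lia. Qed.

Lemma list_sum_add {A} (f g : A -> nat) L :
  list_sum (map (fun x => f x + g x)%nat L) = (list_sum (map f L) + list_sum (map g L))%nat.
Proof. induction L; simpl; try rewrite IHL; lia. Qed.

Lemma list_sum_const1 {A} L : list_sum (map (fun _ : A => 1%nat) L) = length L.
Proof. induction L; simpl; try rewrite IHL; lia. Qed.

Lemma tuples_length n K : length (tuples n K) = (K ^ n)%nat.
Proof.
  induction n; simpl; auto.
  rewrite length_flat_map.
  rewrite (map_ext _ (fun _ => K)) by (intros; rewrite length_map, length_seq; auto).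
  rewrite <- IHn. clear IHn. induction (tuples n K); simpl; try rewrite IHl; lia.
Qed.

Lemma column_sum (F : list nat -> nat) n K :
  list_sum (map F (tuples (S n) K)) =
  list_sum (map (fun l => list_sum (map (fun j => F (j :: l)) (seq 0 K))) (tuples n K)).
Proof.
  simpl. rewrite list_sum_flat_map. apply f_equal. apply map_ext. intros l.
  rewrite map_map. reflexivity.
Qed.

Lemma list_sum_const {A} (c : nat) (L : list A) : list_sum (map (fun _ => c) L) = (c * length L)%nat.
Proof. induction L; simpl; try rewrite IHL; lia. Qed.

Lemma ref1 (f : nat -> nat) K s : (0 < s)%nat ->
  list_sum (map (fun j => f (j / s)%nat) (seq 0 (K * s)%nat)) = (s * list_sum (map f (seq 0 K)))%nat.
Proof.
  intros Hs. induction K; [simpl; lia|].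
  rewrite Nat.mul_succ_l.
  rewrite seq_app, map_app, list_sum_app, IHK. rewrite (seq_S K 0), map_app, list_sum_app.
  simpl. rewrite (map_ext_in (fun j => f (j / s)%nat) (fun _ => f K) (seq (K*s) s)).
  - rewrite list_sum_const, length_seq. lia.
  - intros j Hj. apply in_seq in Hj. f_equal. symmetry.
    apply (Nat.div_unique _ _ _ (j - K * s)); lia.
Qed.

Lemma refn n K s (F : list nat -> nat) : (0 < s)%nat ->
  list_sum (map (fun l => F (map (fun a => (a / s)%nat) l)) (tuples n (K * s)%nat)) =
  (s ^ n * list_sum (map F (tuples n K)))%nat.
Proof.
  intros Hs. revert F. induction n; intros F; simpl; [lia|].
  rewrite !list_sum_flat_map.
  rewrite (map_ext (fun a => list_sum (map (fun l => F (map (fun a0 => (a0 / s)%nat) l)) (map (fun j => j :: a) (seq 0 (K * s)%nat))))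
     (fun a => (fun l' => s * list_sum (map (fun i => F (i :: l')) (seq 0 K)))%nat (map (fun a0 => (a0 / s)%nat) a))).
  2:{ intros a. rewrite map_map. simpl. apply (ref1 (fun i => F (i :: map (fun a0 => (a0 / s)%nat) a))). auto. }
  pose proof (IHn (fun l2 => (s * list_sum (map (fun i => F (i :: l2)) (seq 0 K)))%nat)) as IH2; cbv beta in IH2; rewrite IH2. rewrite list_sum_mul.
  rewrite (map_ext (fun a => list_sum (map F (map (fun j => j :: a) (seq 0 K)))) (fun a => list_sum (map (fun i => F (i :: a)) (seq 0 K)))).
  2:{ intros; rewrite map_map; auto. }
  lia.
Qed.

Lemma nth_map0 (f : nat -> nat) l i : f 0%nat = 0%nat -> nth i (map f l) 0%nat = f (nth i l 0%nat).
Proof. intros H. rewrite <- (map_nth f l 0%nat i), H. reflexivity. Qed.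

Lemma ind_le2 {A B} (P : A -> Prop) (Q : B -> Prop) a b : (P a -> Q b) -> (ind P a <= ind Q b)%nat.
Proof. unfold ind; do 2 destruct excluded_middle_informative; intuition lia. Qed.

Lemma corner_bounds (a t u : nat) : (0 < t)%nat -> (0 < u)%nat ->
  INR (a / t) / INR u <= INR a / INR (u * t) <= INR (S (a / t)) / INR u.
Proof.
  intros Ht Hu.
  pose proof (Nat.div_mod a t ltac:(lia)) as Hd. pose proof (Nat.mod_upper_bound a t ltac:(lia)) as Hm.
  set (q := (a / t)%nat) in *. set (r := (a mod t)%nat) in *.
  assert (Ha : INR a = INR t * INR q + INR r) by (rewrite Hd at 1; rewrite plus_INR, mult_INR; ring).
  assert (Hr : INR r + 1 <= INR t) by (rewrite <- S_INR; apply le_INR; lia).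
  assert (0 <= INR r) by apply pos_INR.
  assert (0 < INR t) by (apply lt_0_INR; lia). assert (0 < INR u) by (apply lt_0_INR; lia).
  rewrite mult_INR, S_INR, Ha. split.
  - apply (Rmult_le_reg_r (INR u * INR t)); [nra|].
    field_simplify; try lra; try nra.
  - apply (Rmult_le_reg_r (INR u * INR t)); [nra|].
    field_simplify; try lra; try nra.
Qed.

Lemma cross n A m m' : inner_approx n 1 A m <= outer_approx n 1 A m'.
Proof.
  unfold inner_approx, outer_approx.
  set (Pin := fun l => forall x, gcube n 1 m l x -> A x).
  set (Pout := fun l => exists x, gcube n 1 m' l x /\ A x).
  assert (Key : (countP Pin (tuples n (2 * 1 * S m)) * S m' ^ n <= countP Pout (tuples n (2 * 1 * S m')) * S m ^ n)%nat).
  { rewrite !countP_sum.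
    rewrite Nat.mul_comm, <- (refn n (2 * 1 * S m) (S m') (ind Pin)) by lia.
    rewrite (Nat.mul_comm _ (S m ^ n)), <- (refn n (2 * 1 * S m') (S m) (ind Pout)) by lia.
    replace (2 * 1 * S m' * S m)%nat with (2 * 1 * S m * S m')%nat by lia.
    apply list_sum_le. intros l _. apply ind_le2. intros Hin.
    set (x := fun i => -1 + INR (nth i l 0%nat) / INR (S m * S m')).
    assert (Hx1 : gcube n 1 m (map (fun a => (a / S m')%nat) l) x).
    { intros i Hi. rewrite nth_map0 by reflexivity. unfold x. change (INR 1) with 1.
      pose proof (corner_bounds (nth i l 0%nat) (S m') (S m) ltac:(lia) ltac:(lia)). lra. }
    assert (Hx2 : gcube n 1 m' (map (fun a => (a / S m)%nat) l) x).
    { intros i Hi. rewrite nth_map0 by reflexivity. unfold x. change (INR 1) with 1.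
      rewrite Nat.mul_comm.
      pose proof (corner_bounds (nth i l 0%nat) (S m) (S m') ltac:(lia) ltac:(lia)). lra. }
    exists x. split; auto. }
  apply le_INR in Key. rewrite !mult_INR, !pow_INR in Key.
  assert (0 < INR (S m) ^ n) by (apply pow_lt, lt_0_INR; lia).
  assert (0 < INR (S m') ^ n) by (apply pow_lt, lt_0_INR; lia).
  apply (Rmult_le_reg_r (INR (S m) ^ n * INR (S m') ^ n)); [nra|].
  field_simplify; lra.
Qed.

Lemma jordan n A :
  Un_cv (fun m => outer_approx n 1 A m - inner_approx n 1 A m) 0 ->
  exists v, Un_cv (inner_approx n 1 A) v /\ Un_cv (outer_approx n 1 A) v.
Proof.
  intros Hcv.
  set (E := fun y => exists m, y = inner_approx n 1 A m).
  assert (HE : bound E).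
  { exists (outer_approx n 1 A 0). intros y [m ->]. apply cross. }
  destruct (completeness E HE) as [v [Hub Hlub]].
  { exists (inner_approx n 1 A 0). exists 0%nat. reflexivity. }
  assert (H1 : forall m, inner_approx n 1 A m <= v) by (intros m; apply Hub; exists m; auto).
  assert (H2 : forall m, v <= outer_approx n 1 A m).
  { intros m. apply Hlub. intros y [m' ->]. apply cross. }
  exists v. split.
  - intros eps Heps. destruct (Hcv eps Heps) as [N HN]. exists N. intros m Hm.
    specialize (HN m Hm). specialize (H1 m). specialize (H2 m). unfold R_dist in *.
    rewrite Rminus_0_r in HN. rewrite Rabs_left1 by lra. rewrite Rabs_right in HN by lra. lra.
  - intros eps Heps. destruct (Hcv eps Heps) as [N HN]. exists N. intros m Hm.
    specialize (HN m Hm). specialize (H1 m). specialize (H2 m). unfold R_dist in *.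
    rewrite Rminus_0_r in HN. rewrite Rabs_right by lra. rewrite Rabs_right in HN by lra. lra.
Qed.

Lemma l1_shift n x y : l1dist (S n) x y = Rabs (x 0%nat - y 0%nat) + l1dist n (fun i => x (S i)) (fun i => y (S i)).
Proof.
  induction n.
  - simpl. ring.
  - change (l1dist (S (S n)) x y) with (l1dist (S n) x y + Rabs (x (S n) - y (S n))).
    rewrite IHn. simpl. ring.
Qed.

Lemma l1_nonneg n x y : 0 <= l1dist n x y.
Proof. induction n; simpl; [lra|]. pose proof (Rabs_pos (x n - y n)). lra. Qed.

Lemma l1_coord n x y i : (i < n)%nat -> Rabs (x i - y i) <= l1dist n x y.
Proof.
  induction n; intros Hi; [lia|]. simpl.
  destruct (Nat.eq_dec i n) as [->|Hne].
  - pose proof (l1_nonneg n x y). lra.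
  - pose proof (IHn ltac:(lia)). pose proof (Rabs_pos (x n - y n)). lra.
Qed.

Lemma l1_lip n u v w : l1dist n u w <= l1dist n v w + l1dist n u v.
Proof.
  induction n; simpl; [lra|].
  pose proof (Rabs_triang (u n - v n) (v n - w n)).
  replace (u n - v n + (v n - w n)) with (u n - w n) in H by ring. lra.
Qed.

Lemma l1_bound n u v h : (forall i, (i < n)%nat -> Rabs (u i - v i) <= h) -> l1dist n u v <= INR n * h.
Proof.
  induction n; intros H; [simpl; lra|].
  change (l1dist (S n) u v) with (l1dist n u v + Rabs (u n - v n)). rewrite S_INR. pose proof (IHn (fun i Hi => H i ltac:(lia))). pose proof (H n ltac:(lia)). lra.
Qed.

Lemma gcube_cons n m j l x :
  gcube (S n) 1 m (j :: l) x <->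
  (- INR 1 + INR j / INR (S m) <= x 0%nat <= - INR 1 + INR (S j) / INR (S m)) /\
  gcube n 1 m l (fun i => x (S i)).
Proof.
  split.
  - intros H. split; [apply (H 0%nat); lia|]. intros i Hi. apply (H (S i)). lia.
  - intros [H0 H] i Hi. destruct i; [exact H0|]. apply H. lia.
Qed.

Definition ystar m l : nat -> R := fun i => - INR 1 + INR (nth i l 0%nat) / INR (S m).

Lemma ystar_in n m l : gcube n 1 m l (ystar m l).
Proof.
  intros i Hi. unfold ystar. split; [lra|].
  assert (0 < INR (S m)) by (apply lt_0_INR; lia).
  rewrite (S_INR (nth i l 0%nat)). unfold Rdiv. rewrite Rmult_plus_distr_r.
  pose proof (Rinv_0_lt_compat _ H). lra.
Qed.

Lemma ystar_close n m l y : gcube n 1 m l y ->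
  forall i, (i < n)%nat -> Rabs (y i - ystar m l i) <= / INR (S m).
Proof.
  intros H i Hi. specialize (H i Hi). unfold ystar.
  rewrite (S_INR (nth i l 0%nat)) in H. unfold Rdiv in *. rewrite Rmult_plus_distr_r in H.
  rewrite Rabs_right; lra.
Qed.

Definition cnt {A} (P : A -> Prop) (L : list A) : nat := list_sum (map (ind P) L).

Lemma strip_int a b K : forall s,
  INR (cnt (fun j => a <= INR j <= b) (seq s K)) <= Rmax 0 (b - Rmax a (INR s) + 1).
Proof.
  unfold cnt. induction K; intros s; simpl.
  - apply Rmax_l.
  - rewrite plus_INR. specialize (IHK (S s)). rewrite S_INR in IHK.
    unfold ind at 1. destruct excluded_middle_informative as [Hj|Hj]; simpl INR.
    + revert IHK. unfold Rmax. repeat destruct Rle_dec; intros; lra.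
    + revert IHK. unfold Rmax. repeat destruct Rle_dec; intros; lra.
Qed.

Lemma strip a b h K : 0 < h -> a <= b + h ->
  INR (cnt (fun j => a <= INR j * h <= b) (seq 0 K)) <= (b - a) / h + 1.
Proof.
  intros Hh Hab.
  assert (Hle : le (cnt (fun j => a <= INR j * h <= b) (seq 0 K)) (cnt (fun j => a / h <= INR j <= b / h) (seq 0 K))).
  { unfold cnt. apply list_sum_le. intros j _. apply ind_le. intros [H1 H2]. split.
    - apply (Rmult_le_reg_r h); auto. unfold Rdiv. rewrite Rmult_assoc, Rinv_l, Rmult_1_r by lra. lra.
    - apply (Rmult_le_reg_r h); auto. unfold Rdiv. rewrite Rmult_assoc, Rinv_l, Rmult_1_r by lra. lra. }
  apply le_INR in Hle. pose proof (strip_int (a/h) (b/h) K 0%nat) as H. simpl INR in H.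
  assert (Hq : (b - a) / h + 1 = b / h - a / h + 1) by (field; lra).
  assert (0 <= (b - a) / h + 1).
  { apply Rle_trans with ((-h)/h + 1). right. field. lra. apply Rplus_le_compat_r.
    unfold Rdiv. apply Rmult_le_compat_r. left. apply Rinv_0_lt_compat. lra. lra. }
  revert H. unfold Rmax at 2. destruct Rle_dec; intros H.
  - revert H. unfold Rmax. destruct Rle_dec; intros; lra.
  - revert H. unfold Rmax. destruct Rle_dec; intros; lra.
Qed.

Lemma abs_le x y : Rabs x <= y <-> - y <= x <= y.
Proof. unfold Rabs; destruct Rcase_abs; split; intros; lra. Qed.

Lemma cnt_split {A} (P Q : A -> Prop) L : le (cnt P L) (cnt Q L + cnt (fun x => P x /\ ~ Q x) L).
Proof. unfold cnt. rewrite <- list_sum_add. apply list_sum_le. intros; apply ind_split. Qed.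

Lemma cnt_le {A} (P Q : A -> Prop) L : (forall a, In a L -> P a -> Q a) -> le (cnt P L) (cnt Q L).
Proof. intros H. unfold cnt. apply list_sum_le. intros a Ha. apply ind_le. auto. Qed.

Lemma cnt_or4 {A} (P S1 S2 S3 S4 : A -> Prop) L : (forall a, P a -> S1 a \/ S2 a \/ S3 a \/ S4 a) ->
  le (cnt P L) (cnt S1 L + cnt S2 L + cnt S3 L + cnt S4 L).
Proof.
  intros H. unfold cnt. rewrite <- !list_sum_add. apply list_sum_le. intros a _.
  specialize (H a). unfold ind. repeat destruct excluded_middle_informative; intuition lia.
Qed.

Lemma oneD_up h K P Q c0 w (N : nat) : 0 < h -> 0 <= w -> 4 * (w / h) + 8 <= INR N ->
  le (cnt (fun j => exists t, -1 + INR j * h <= t <= -1 + (INR j + 1) * h /\ Rabs t <= P /\ Rabs (t - c0) <= Q) (seq 0 K))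
     (cnt (fun j => forall t, -1 + INR j * h <= t <= -1 + (INR j + 1) * h -> Rabs t <= P - w /\ Rabs (t - c0) <= Q - w) (seq 0 K) + N).
Proof.
  intros Hh Hw HN.
  eapply Nat.le_trans; [apply cnt_split|]. apply Nat.add_le_mono_l.
  eapply Nat.le_trans.
  { apply (cnt_or4 _ (fun j => 1 - P - h <= INR j * h <= 1 - P + w)
                     (fun j => 1 + P - w - h <= INR j * h <= 1 + P)
                     (fun j => 1 + c0 - Q - h <= INR j * h <= 1 + c0 - Q + w)
                     (fun j => 1 + c0 + Q - w - h <= INR j * h <= 1 + c0 + Q)).
    intros j [[t [Ht [H1 H2]]] Hn]. apply abs_le in H1. apply abs_le in H2.
    destruct (Rle_dec (- P + w) (-1 + INR j * h)).
    2:{ left. lra. }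
    destruct (Rle_dec (-1 + (INR j + 1) * h) (P - w)).
    2:{ right; left. lra. }
    destruct (Rle_dec (c0 - Q + w) (-1 + INR j * h)).
    2:{ right; right; left. lra. }
    destruct (Rle_dec (-1 + (INR j + 1) * h) (c0 + Q - w)).
    2:{ right; right; right. lra. }
    exfalso. apply Hn. intros t' Ht'. rewrite !abs_le. lra. }
  apply INR_le. rewrite !plus_INR.
  assert (E : forall a b, b - a = w + h -> INR (cnt (fun j => a <= INR j * h <= b) (seq 0 K)) <= w / h + 2).
  { intros a b Hab. eapply Rle_trans; [apply strip; lra|].
    rewrite Hab. right. field. lra. }
  pose proof (E (1 - P - h) (1 - P + w) ltac:(ring)).
  pose proof (E (1 + P - w - h) (1 + P) ltac:(ring)).
  pose proof (E (1 + c0 - Q - h) (1 + c0 - Q + w) ltac:(ring)).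
  pose proof (E (1 + c0 + Q - w - h) (1 + c0 + Q) ltac:(ring)).
  lra.
Qed.

Definition Aset n c r : (nat -> R) -> Prop := fun x => Cball n (fun _ => 0) 1 x /\ Cball n c r x.

Lemma cell_conv m j t : - INR 1 + INR j / INR (S m) <= t <= - INR 1 + INR (S j) / INR (S m) <->
  -1 + INR j * / INR (S m) <= t <= -1 + (INR j + 1) * / INR (S m).
Proof. rewrite (S_INR j). unfold Rdiv. change (INR 1) with 1. split; intros; lra. Qed.

Lemma shift_close n m l x : gcube n 1 m l x -> l1dist n x (ystar m l) <= INR n * / INR (S m)
  /\ l1dist n (ystar m l) x <= INR n * / INR (S m).
Proof.
  intros H. split; apply l1_bound; intros i Hi; pose proof (ystar_close n m l x H i Hi); auto.
  rewrite Rabs_minus_sym; auto.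
Qed.

Lemma col_up n m l c r :
  le (cnt (fun j => exists x, gcube (S n) 1 m (j :: l) x /\ Aset (S n) c r x) (seq 0 (2 * 1 * S m)))
     (cnt (fun j => forall x, gcube (S n) 1 m (j :: l) x -> Aset (S n) c r x) (seq 0 (2 * 1 * S m)) + (8 * n + 8)).
Proof.
  set (h := / INR (S m)).
  assert (Hh : 0 < h) by (apply Rinv_0_lt_compat, lt_0_INR; lia).
  set (D0 := l1dist n (ystar m l) (fun _ => 0)).
  set (Dc := l1dist n (ystar m l) (fun i => c (S i))).
  set (d := INR n * h).
  assert (Hd : 0 <= d) by (apply Rmult_le_pos; [apply pos_INR | lra]).
  eapply Nat.le_trans.
  { apply (cnt_le _ (fun j => exists t, -1 + INR j * h <= t <= -1 + (INR j + 1) * h /\ Rabs t <= (1 - D0 + d) /\ Rabs (t - c 0%nat) <= (r - Dc + d))).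
    intros j _ [x [Hx [H1 H2]]]. apply gcube_cons in Hx. destruct Hx as [Hx0 Hx].
    apply cell_conv in Hx0. exists (x 0%nat). split; [exact Hx0|].
    destruct (shift_close _ _ _ _ Hx) as [_ Hs].
    unfold Cball in H1, H2. rewrite l1_shift in H1, H2. cbv beta in H1.
    rewrite Rminus_0_r in H1.
    pose proof (l1_lip n (ystar m l) (fun i => x (S i)) (fun _ => 0)).
    pose proof (l1_lip n (ystar m l) (fun i => x (S i)) (fun i => c (S i))).
    unfold D0, Dc, d, h in *. split; lra. }
  eapply Nat.le_trans.
  { apply (oneD_up h _ _ _ (c 0%nat) (2 * d) (8 * n + 8)); auto. lra.
    rewrite plus_INR, mult_INR. replace (2 * d / h) with (2 * INR n) by (unfold d; field; lra).
    assert (INR 8 = 8) by (simpl; lra). rewrite H. lra. }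
  apply Nat.add_le_mono_r. apply cnt_le. intros j _ Hj x Hx.
  apply gcube_cons in Hx. destruct Hx as [Hx0 Hx]. apply cell_conv in Hx0.
  destruct (Hj _ Hx0) as [H1 H2].
  destruct (shift_close _ _ _ _ Hx) as [Hs _].
  pose proof (l1_lip n (fun i => x (S i)) (ystar m l) (fun _ => 0)).
  pose proof (l1_lip n (fun i => x (S i)) (ystar m l) (fun i => c (S i))).
  unfold D0, Dc, d, h in *.
  unfold Aset, Cball. rewrite !l1_shift. cbv beta. rewrite Rminus_0_r. split; lra.
Qed.

Lemma Aset_bound n c r : forall x, Aset n c r x -> forall i, (i < n)%nat -> - INR 1 <= x i <= INR 1.
Proof.
  intros x [H1 _] i Hi. unfold Cball in H1. pose proof (l1_coord _ x (fun _ => 0) i Hi).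
  change (INR 1) with 1. rewrite Rminus_0_r in H. apply abs_le. lra.
Qed.

Lemma vol_exists n c r : exists v, Un_cv (inner_approx (S n) 1 (Aset (S n) c r)) v /\ Un_cv (outer_approx (S n) 1 (Aset (S n) c r)) v.
Proof.
  apply jordan.
  set (C := INR (8 * n + 8) * 2 ^ n).
  assert (HC : 0 <= C) by (unfold C; apply Rmult_le_pos; [apply pos_INR| apply pow_le; lra]).
  assert (Hb : forall m, 0 <= outer_approx (S n) 1 (Aset (S n) c r) m - inner_approx (S n) 1 (Aset (S n) c r) m <= C * / INR (S m)).
  { intros m. unfold outer_approx, inner_approx.
    set (K := (2 * 1 * S m)%nat).
    set (Pin := fun l => forall x, gcube (S n) 1 m l x -> Aset (S n) c r x).
    set (Pout := fun l => exists x, gcube (S n) 1 m l x /\ Aset (S n) c r x).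
    assert (H1 : le (countP Pin (tuples (S n) K)) (countP Pout (tuples (S n) K))).
    { rewrite !countP_sum. apply list_sum_le. intros l _. apply ind_le. intros H.
      exists (ystar m l). split; [apply ystar_in| apply H, ystar_in]. }
    assert (H2 : le (countP Pout (tuples (S n) K)) (countP Pin (tuples (S n) K) + (8 * n + 8) * K ^ n)).
    { rewrite !countP_sum, !column_sum, <- (tuples_length n K).
      apply list_sum_le_add. intros l _. apply (col_up n m l c r). }
    apply le_INR in H1. apply le_INR in H2. rewrite plus_INR, mult_INR, pow_INR in H2.
    assert (HK : INR K = 2 * INR (S m)) by (unfold K; rewrite !mult_INR; simpl; ring).
    rewrite HK, Rpow_mult_distr in H2.
    assert (Hs : 0 < INR (S m)) by (apply lt_0_INR; lia).
    assert (Hsn : 0 < INR (S m) ^ n) by (apply pow_lt; auto).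
    change (INR (S m) ^ S n) with (INR (S m) * INR (S m) ^ n).
    split.
    - unfold Rdiv. rewrite <- Rmult_minus_distr_r. apply Rmult_le_pos; [lra|].
      left. apply Rinv_0_lt_compat. nra.
    - unfold C. apply (Rmult_le_reg_r (INR (S m) * INR (S m) ^ n)); [nra|].
      field_simplify; try lra; nra. }
  intros eps Heps.
  destruct (archimed_cor1 (eps / (C + 1))) as [N [HN HN0]].
  { apply Rdiv_lt_0_compat; lra. }
  exists N. intros m Hm. unfold R_dist. rewrite Rminus_0_r.
  destruct (Hb m) as [Hb1 Hb2]. rewrite Rabs_right by lra.
  assert (HN' : / INR (S m) <= / INR N).
  { apply Rinv_le_contravar. apply lt_0_INR; lia. apply le_INR; lia. }
  assert (0 < INR (S m)) by (apply lt_0_INR; lia).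
  assert (0 <= / INR (S m)) by (left; apply Rinv_0_lt_compat; lra).
  apply Rle_lt_trans with (C * / INR (S m)); auto.
  apply Rle_lt_trans with ((C + 1) * / INR N).
  - apply Rle_trans with ((C+1) * / INR (S m)). nra. apply Rmult_le_compat_l; lra.
  - apply (Rmult_lt_reg_r (/ (C + 1))). apply Rinv_0_lt_compat; lra.
    replace ((C + 1) * / INR N * / (C + 1)) with (/ INR N) by (field; split; [lra| apply not_0_INR; lia]).
    exact HN.
Qed.

Lemma cnt_compl {A} (P : A -> Prop) L : (cnt P L + cnt (fun x => ~ P x) L)%nat = length L.
Proof. unfold cnt. rewrite <- list_sum_add, <- (list_sum_const1 L). f_equal. apply map_ext. intros; apply ind_compl. Qed.

Lemma cnt_or2 {A} (P S1 S2 : A -> Prop) L : (forall a, In a L -> P a -> S1 a \/ S2 a) ->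
  le (cnt P L) (cnt S1 L + cnt S2 L).
Proof.
  intros H. unfold cnt. rewrite <- !list_sum_add. apply list_sum_le. intros a Ha.
  specialize (H a Ha). unfold ind. repeat destruct excluded_middle_informative; intuition lia.
Qed.

Lemma oneD_low m p q c0 : p <= 1 ->
  le (cnt (fun j => forall t, -1 + INR j * / INR (S m) <= t <= -1 + (INR j + 1) * / INR (S m) -> Rabs t <= p /\ Rabs (t - c0) <= q) (seq 0 (2 * 1 * S m)))
     (cnt (fun j => exists t, -1 + INR j * / INR (S m) <= t <= -1 + (INR j + 1) * / INR (S m) /\ Rabs t <= p /\ Rabs t <= q) (seq 0 (2 * 1 * S m))).
Proof.
  intros Hp.
  set (h := / INR (S m)). set (K := (2 * 1 * S m)%nat).
  assert (Hs : 0 < INR (S m)) by (apply lt_0_INR; lia).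
  assert (Hh : 0 < h) by (apply Rinv_0_lt_compat; auto).
  assert (HK : INR K * h = 2) by (unfold K, h; rewrite !mult_INR; replace (INR 2) with 2 by (simpl; lra); change (INR 1) with 1; field; lra).
  set (In1 := fun j => forall t, -1 + INR j * h <= t <= -1 + (INR j + 1) * h -> Rabs t <= p /\ Rabs (t - c0) <= q).
  set (M := Rmin p q).
  assert (HMp : M <= p) by apply Rmin_l. assert (HMq : M <= q) by apply Rmin_r.
  assert (HMpq : M = p \/ M = q) by (unfold M, Rmin; destruct Rle_dec; auto).
  destruct (Rlt_le_dec M 0) as [HM|HM].
  { apply cnt_le. intros j _ Hj. exfalso.
    destruct (Hj (-1 + INR j * h)) as [H1 H2].
    { split; [lra|]. lra. }
    pose proof (Rabs_pos (-1 + INR j * h)). pose proof (Rabs_pos (-1 + INR j * h - c0)). lra. }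
  apply INR_le.
  assert (Hin : INR (cnt In1 (seq 0 K)) <= 2 * M / h).
  { destruct HMpq as [E|E].
    - apply Rle_trans with (INR (cnt (fun j => 1 - p <= INR j * h <= 1 + p - h) (seq 0 K))).
      + apply le_INR, cnt_le. intros j _ Hj.
        destruct (Hj (-1 + INR j * h)) as [H1 _]; [split; lra|].
        destruct (Hj (-1 + (INR j + 1) * h)) as [H2 _]; [split; lra|].
        apply abs_le in H1. apply abs_le in H2. split; lra.
      + eapply Rle_trans; [apply strip; lra|]. right. rewrite E. field. lra.
    - apply Rle_trans with (INR (cnt (fun j => 1 + c0 - q <= INR j * h <= 1 + c0 + q - h) (seq 0 K))).
      + apply le_INR, cnt_le. intros j _ Hj.
        destruct (Hj (-1 + INR j * h)) as [_ H1]; [split; lra|].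
        destruct (Hj (-1 + (INR j + 1) * h)) as [_ H2]; [split; lra|].
        apply abs_le in H1. apply abs_le in H2. split; lra.
      + eapply Rle_trans; [apply strip; lra|]. right. rewrite E. field. lra. }
  set (Meet := fun j => -1 + INR j * h <= M /\ - M <= -1 + (INR j + 1) * h).
  assert (Hmo : le (cnt Meet (seq 0 K)) (cnt (fun j => exists t, -1 + INR j * h <= t <= -1 + (INR j + 1) * h /\ Rabs t <= p /\ Rabs t <= q) (seq 0 K))).
  { apply cnt_le. intros j _ [H1 H2]. exists (Rmax (-1 + INR j * h) (- M)).
    assert (Hmx : Rmax (-1 + INR j * h) (- M) = -1 + INR j * h \/ Rmax (-1 + INR j * h) (- M) = - M)
      by (unfold Rmax; destruct Rle_dec; auto).
    pose proof (Rmax_l (-1 + INR j * h) (- M)). pose proof (Rmax_r (-1 + INR j * h) (- M)).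
    rewrite !abs_le. lra. }
  apply le_INR in Hmo.
  assert (Hnm : le (cnt (fun j => ~ Meet j) (seq 0 K))
     (cnt (fun j => 1 + M <= INR j * h <= (INR K - 1) * h) (seq 0 K) + cnt (fun j => 0 <= INR j * h <= 1 - M - h) (seq 0 K))).
  { apply cnt_or2. intros j Hj HnM. apply in_seq in Hj.
    assert (INR j + 1 <= INR K) by (rewrite <- S_INR; apply le_INR; lia).
    assert (0 <= INR j * h) by (apply Rmult_le_pos; [apply pos_INR| lra]).
    unfold Meet in HnM.
    destruct (Rle_dec (-1 + INR j * h) M).
    - right. split; auto. destruct (Rle_dec (- M) (-1 + (INR j + 1) * h)); [tauto|]. lra.
    - left. split; [lra|]. nra. }
  apply le_INR in Hnm. rewrite plus_INR in Hnm.
  pose proof (cnt_compl Meet (seq 0 K)) as Hc. apply (f_equal INR) in Hc. rewrite plus_INR, length_seq in Hc.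
  assert (S1 : INR (cnt (fun j => 1 + M <= INR j * h <= (INR K - 1) * h) (seq 0 K)) <= ((INR K - 1) * h - (1 + M)) / h + 1)
    by (apply strip; lra).
  assert (S2 : INR (cnt (fun j => 0 <= INR j * h <= 1 - M - h) (seq 0 K)) <= (1 - M - h - 0) / h + 1)
    by (apply strip; lra).
  assert (Eq1 : ((INR K - 1) * h - (1 + M)) / h + 1 = INR K - (1 + M) / h) by (field; lra).
  assert (Eq2 : (1 - M - h - 0) / h + 1 = (1 - M) / h) by (field; lra).
  assert (Eq3 : 2 * M / h = (1 + M) / h - (1 - M) / h) by (field; lra).
  fold In1. lra.
Qed.

Lemma col_low n m l c c' r : c' 0%nat = 0 -> (forall i, c' (S i) = c (S i)) ->
  le (cnt (fun j => forall x, gcube (S n) 1 m (j :: l) x -> Aset (S n) c r x) (seq 0 (2 * 1 * S m)))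
     (cnt (fun j => exists x, gcube (S n) 1 m (j :: l) x /\ Aset (S n) c' r x) (seq 0 (2 * 1 * S m))).
Proof.
  intros H0 HS.
  assert (Ec : (fun i => c' (S i)) = (fun i => c (S i))) by (apply functional_extensionality; auto).
  set (D0 := l1dist n (ystar m l) (fun _ => 0)).
  set (Dc := l1dist n (ystar m l) (fun i => c (S i))).
  assert (HD0 : 0 <= D0) by apply l1_nonneg.
  set (pt := fun t : R => fun i => match i with O => t | S i' => ystar m l i' end).
  assert (Hpt : forall j t, -1 + INR j * / INR (S m) <= t <= -1 + (INR j + 1) * / INR (S m) -> gcube (S n) 1 m (j :: l) (pt t)).
  { intros j t Ht. apply gcube_cons. split; [apply cell_conv; exact Ht| apply ystar_in]. }
  eapply Nat.le_trans.
  { apply (cnt_le _ (fun j => forall t, -1 + INR j * / INR (S m) <= t <= -1 + (INR j + 1) * / INR (S m) -> Rabs t <= 1 - D0 /\ Rabs (t - c 0%nat) <= r - Dc)).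
    intros j _ Hj t Ht. destruct (Hj _ (Hpt j t Ht)) as [H1 H2].
    unfold Cball in H1, H2. rewrite l1_shift in H1, H2. cbv beta in H1. simpl in H1, H2.
    rewrite Rminus_0_r in H1. change (l1dist n (fun i : nat => ystar m l i) (fun _ : nat => 0)) with D0 in H1.
    change (l1dist n (fun i : nat => ystar m l i) (fun i : nat => c (S i))) with Dc in H2. split; lra. }
  eapply Nat.le_trans; [apply (oneD_low m (1 - D0) (r - Dc) (c 0%nat)); lra|].
  apply cnt_le. intros j _ [t [Ht [H1 H2]]]. exists (pt t). split; [apply Hpt; auto|].
  unfold Aset, Cball. rewrite !l1_shift. cbv beta. simpl. rewrite Ec, H0, Rminus_0_r.
  change (l1dist n (fun i : nat => ystar m l i) (fun _ : nat => 0)) with D0.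
  change (l1dist n (fun i : nat => ystar m l i) (fun i : nat => c (S i))) with Dc. split; lra.
Qed.

Lemma inner_le_outer0 n c c' r m : c' 0%nat = 0 -> (forall i, c' (S i) = c (S i)) ->
  inner_approx (S n) 1 (Aset (S n) c r) m <= outer_approx (S n) 1 (Aset (S n) c' r) m.
Proof.
  intros H0 HS. unfold inner_approx, outer_approx.
  assert (Hs : 0 < INR (S m) ^ S n) by (apply pow_lt, lt_0_INR; lia).
  unfold Rdiv. apply Rmult_le_compat_r; [left; apply Rinv_0_lt_compat; auto|].
  apply le_INR. rewrite !countP_sum, !column_sum. apply list_sum_le. intros l _.
  apply (col_low n m l c c' r H0 HS).
Qed.

Section Swap.
Variable n j0 : nat.
Hypothesis Hj0 : (j0 < n)%nat.

Definition sw (i : nat) : nat := if Nat.eqb i 0 then j0 else if Nat.eqb i j0 then 0%nat else i.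

Lemma sw_inv i : sw (sw i) = i.
Proof. unfold sw. destruct (Nat.eqb_spec i 0); destruct (Nat.eqb_spec i j0); repeat match goal with |- context [Nat.eqb ?a ?b] => destruct (Nat.eqb_spec a b) end; lia. Qed.

Lemma sw_lt i : (i < n)%nat -> (sw i < n)%nat.
Proof. unfold sw. destruct (Nat.eqb_spec i 0); destruct (Nat.eqb_spec i j0); lia. Qed.

Definition swl (l : list nat) : list nat :=
  if Nat.eqb (length l) n then map (fun i => nth (sw i) l 0%nat) (seq 0 n) else l.

Lemma swl_len l : length (swl l) = length l.
Proof. unfold swl. destruct (Nat.eqb_spec (length l) n); auto. rewrite length_map, length_seq; auto. Qed.

Lemma swl_nth l i : length l = n -> (i < n)%nat -> nth i (swl l) 0%nat = nth (sw i) l 0%nat.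
Proof.
  intros Hl Hi. unfold swl. rewrite Hl, Nat.eqb_refl.
  rewrite (nth_indep (map (fun i => nth (sw i) l 0%nat) (seq 0 n)) 0%nat ((fun i => nth (sw i) l 0%nat) 0%nat)) by (rewrite length_map, length_seq; auto).
  pose proof (map_nth (fun i => nth (sw i) l 0%nat) (seq 0 n) 0%nat i) as E; cbv beta in E; rewrite E, seq_nth by auto. reflexivity.
Qed.

Lemma swl_inv l : swl (swl l) = l.
Proof.
  destruct (Nat.eq_dec (length l) n) as [Hl|Hl].
  - apply (nth_ext _ _ 0%nat 0%nat). rewrite !swl_len; auto.
    intros i Hi. rewrite !swl_len, Hl in Hi.
    rewrite swl_nth by (try rewrite swl_len; auto). rewrite swl_nth by (auto; apply sw_lt; auto).
    rewrite sw_inv. reflexivity.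
  - unfold swl at 2. destruct (Nat.eqb_spec (length l) n); [contradiction|].
    unfold swl. destruct (Nat.eqb_spec (length l) n); [contradiction|]. auto.
Qed.

Lemma l1_list m x y : l1dist m x y = fold_right Rplus 0 (map (fun i => Rabs (x i - y i)) (seq 0 m)).
Proof.
  induction m; [reflexivity|]. change (l1dist (S m) x y) with (l1dist m x y + Rabs (x m - y m)). rewrite IHm. rewrite seq_S, map_app, fold_right_app. simpl.
  clear IHm. generalize (Rabs (x m - y m)). intros a. induction (map (fun i => Rabs (x i - y i)) (seq 0 m)); simpl; [ring|].
  rewrite <- IHl. ring.
Qed.

Lemma rsum_perm L L' : Permutation L L' -> fold_right Rplus 0 L = fold_right Rplus 0 L'.
Proof. induction 1; simpl; try lra. Qed.

Lemma sw_perm : Permutation (map sw (seq 0 n)) (seq 0 n).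
Proof.
  apply Permutation_map_same_l.
  - apply Injective_map_NoDup; [|apply seq_NoDup]. intros a b H. rewrite <- (sw_inv a), <- (sw_inv b), H. auto.
  - intros a Ha. apply in_map_iff in Ha. destruct Ha as [i [<- Hi]]. apply in_seq in Hi. apply in_seq.
    pose proof (sw_lt i ltac:(lia)). lia.
Qed.

Lemma l1_sw x y : l1dist n x y = l1dist n (fun i => x (sw i)) (fun i => y (sw i)).
Proof.
  rewrite !l1_list. rewrite <- (map_map sw (fun i => Rabs (x i - y i))).
  apply rsum_perm. apply Permutation_sym. apply Permutation_map. apply sw_perm.
Qed.

Lemma tuples_spec K : forall m l, In l (tuples m K) <-> length l = m /\ (forall i, (i < m)%nat -> (nth i l 0%nat < K)%nat).
Proof.
  induction m; intros l; simpl.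
  - split. intros [<-|[]]. split; auto. intros; lia.
    intros [Hl _]. destruct l; simpl in Hl; try lia. auto.
  - rewrite in_flat_map. split.
    + intros [l' [Hl' Hin]]. apply in_map_iff in Hin. destruct Hin as [j [<- Hj]]. apply in_seq in Hj.
      apply IHm in Hl'. destruct Hl' as [Hl1 Hl2]. simpl. split; [lia|].
      intros [|i] Hi; simpl; [lia|]. apply Hl2. lia.
    + intros [Hl H]. destruct l as [|j l']; simpl in Hl; [lia|]. exists l'. split.
      * apply IHm. split; [lia|]. intros i Hi. apply (H (S i)). lia.
      * apply in_map_iff. exists j. split; auto. apply in_seq. pose proof (H 0%nat). simpl in H0. lia.
Qed.

Lemma tuples_NoDup K : forall m, NoDup (tuples m K).
Proof.
  induction m; simpl. constructor; auto. constructor.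
  induction IHm as [|x l Hx Hl IH]; simpl. constructor.
  apply NoDup_app.
  - apply Injective_map_NoDup; [|apply seq_NoDup]. intros a b E. injection E; auto.
  - exact IH.
  - intros a Ha Hb. apply in_map_iff in Ha. destruct Ha as [j [<- _]].
    apply in_flat_map in Hb. destruct Hb as [y [Hy Hin]]. apply in_map_iff in Hin. destruct Hin as [j' [E _]].
    injection E. intros ->. contradiction.
Qed.

Lemma sum_swap K (F : list nat -> nat) :
  list_sum (map F (tuples n K)) = list_sum (map (fun l => F (swl l)) (tuples n K)).
Proof.
  rewrite <- (map_map swl F). apply Permutation_list_sum. apply Permutation_map.
  apply Permutation_sym. apply Permutation_map_same_l.
  - apply Injective_map_NoDup; [|apply tuples_NoDup]. intros a b H. rewrite <- (swl_inv a), <- (swl_inv b), H. auto.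
  - intros a Ha. apply in_map_iff in Ha. destruct Ha as [l [<- Hl]]. apply tuples_spec in Hl. destruct Hl as [Hl1 Hl2].
    apply tuples_spec. rewrite swl_len. split; auto. intros i Hi. rewrite swl_nth by auto. apply Hl2, sw_lt; auto.
Qed.

Lemma gcube_sw m l x : length l = n -> (gcube n 1 m (swl l) x <-> gcube n 1 m l (fun i => x (sw i))).
Proof.
  intros Hl. split.
  - intros H i Hi. specialize (H (sw i) (sw_lt i Hi)). rewrite swl_nth, sw_inv in H by (auto; apply sw_lt; auto). exact H.
  - intros H i Hi. rewrite swl_nth by auto. specialize (H (sw i) (sw_lt i Hi)). cbv beta in H. rewrite sw_inv in H. exact H.
Qed.

Lemma comp_sw (x : nat -> R) : (fun i => x (sw (sw i))) = x.
Proof. apply functional_extensionality. intros i. rewrite sw_inv. auto. Qed.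

Lemma Aset_sw c r x : Aset n c r x <-> Aset n (fun i => c (sw i)) r (fun i => x (sw i)).
Proof. unfold Aset, Cball. rewrite (l1_sw x c), (l1_sw x (fun _ => 0)). tauto. Qed.

Lemma ind_iff {A B} (P : A -> Prop) (Q : B -> Prop) a b : (P a <-> Q b) -> ind P a = ind Q b.
Proof. intros H. unfold ind. do 2 destruct excluded_middle_informative; tauto. Qed.

Lemma inner_sw c r m : inner_approx n 1 (Aset n c r) m = inner_approx n 1 (Aset n (fun i => c (sw i)) r) m.
Proof.
  unfold inner_approx. f_equal. f_equal. rewrite !countP_sum, sum_swap.
  apply f_equal. apply map_ext_in. intros l Hl. apply tuples_spec in Hl. destruct Hl as [Hl _].
  apply ind_iff. split.
  - intros H z Hz. rewrite <- (comp_sw z) in Hz. apply (proj2 (gcube_sw m l (fun i' => z (sw i')) Hl)) in Hz. apply H in Hz.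
    apply Aset_sw in Hz. cbv beta in Hz. rewrite comp_sw in Hz. exact Hz.
  - intros H x Hx. apply gcube_sw in Hx; auto. apply H in Hx. apply Aset_sw. exact Hx.
Qed.

Lemma outer_sw c r m : outer_approx n 1 (Aset n c r) m = outer_approx n 1 (Aset n (fun i => c (sw i)) r) m.
Proof.
  unfold outer_approx. f_equal. f_equal. rewrite !countP_sum, sum_swap.
  apply f_equal. apply map_ext_in. intros l Hl. apply tuples_spec in Hl. destruct Hl as [Hl _].
  apply ind_iff. split.
  - intros [x [Hx HA]]. exists (fun i => x (sw i)). split; [apply gcube_sw; auto|]. apply (proj1 (Aset_sw c r x)); auto.
  - intros [z [Hz HA]]. exists (fun i => z (sw i)). split.
    + apply gcube_sw; auto. cbv beta. rewrite comp_sw. auto.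
    + apply Aset_sw. cbv beta. rewrite comp_sw. auto.
Qed.

End Swap.

Theorem mainTheorem8 (n k : nat) (r : R) (c : nat -> R) :
  0 < r ->
  (2 <= k <= n)%nat ->
  (forall i, (i < n)%nat -> 0 <= c i) ->
  (forall i, (k <= i)%nat -> c i = 0) ->
  exists v v' : R,
    has_volume n (fun x => Cball n (fun _ => 0) 1 x /\ Cball n c r x) v /\
    has_volume n (fun x => Cball n (fun _ => 0) 1 x /\
                   Cball n (fun i => if Nat.eqb i (k - 1) then 0 else c i) r x) v' /\
    v <= v'.
Proof.
  intros Hr Hk Hc Hc0.
  destruct n as [|n']; [lia|].
  set (c' := fun i => if Nat.eqb i (k - 1) then 0 else c i).
  assert (Hj0 : (k - 1 < S n')%nat) by lia.
  destruct (vol_exists n' c r) as [v [Hv1 Hv2]].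
  destruct (vol_exists n' c' r) as [v' [Hv1' Hv2']].
  exists v, v'. split; [|split].
  - exists 1%nat. exact (conj (Aset_bound _ c r) (conj Hv1 Hv2)).
  - exists 1%nat. exact (conj (Aset_bound _ c' r) (conj Hv1' Hv2')).
  - refine (Rle_cv_lim _ Hv1 Hv2'). intros m.
    rewrite (inner_sw (S n') (k - 1) Hj0 c r m), (outer_sw (S n') (k - 1) Hj0 c' r m).
    apply inner_le_outer0.
    + unfold c', sw. simpl. rewrite Nat.eqb_refl. reflexivity.
    + intros i. unfold c'. destruct (Nat.eqb_spec (sw (k - 1) (S i)) (k - 1)) as [E|E]; [|reflexivity].
      exfalso. unfold sw in E. change (Nat.eqb (S i) 0) with false in E. cbv iota in E. destruct (Nat.eqb_spec (S i) (k - 1)); lia.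
Qed.
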